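(* Let $X$ be a bipartite distance-regular graph of diameter $3$ on $n$ vertices. If $X$ is not a cocktail-party graph, then $\mathrm{motion}(X)\geq \frac{1}{12}n$.
   Context: A distance-regular graph is a connected graph such that for vertices $v,w$ at distance $i$ the numbers of neighbours of $w$ at distance $i-1,i,i+1$ from $v$ are constants depending only on $i$. A cocktail-party graph is a regular complete bipartite graph with one perfect matching removed. The motion of a graph is the minimum, over non-identity automorphisms, of the number of vertices not fixed. *)

(* Defs.v *)
From mathcomp Require Import all_boot all_fingroup.
Set Implicit Arguments. Unset Strict Implicit. Unset Printing Implicit Defensive.

Definition simple_graph (T : finType) (e : rel T) : Prop :=
  symmetric e /\ irreflexive e.

Fixpoint ball (T : finType) (e : rel T) (x : T) (k : nat) : {set T} :=
  match k with
  | 0 => [set x]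
  | k'.+1 => ball e x k' :|: [set y | [exists z in ball e x k', e z y]]
  end.

(* graph distance: least k with y in ball e x k; (equals #|T| if y is
   unreachable, which cannot happen in a connected graph) *)
Definition gdist (T : finType) (e : rel T) (x y : T) : nat :=
  find (fun k => y \in ball e x k) (iota 0 #|T|).

Definition gconnected (T : finType) (e : rel T) : Prop :=
  forall x y : T, connect e x y.

Definition distance_regular (T : finType) (e : rel T) : Prop :=
  gconnected e /\
  exists f : nat -> nat -> nat, forall (v w : T) (j : nat),
    let i := gdist e v w in
    [|| j.+1 == i, j == i | j == i.+1] ->
    #|[set u | e w u & gdist e v u == j]| = f i j.

Definition diameter_eq (T : finType) (e : rel T) (d : nat) : Prop :=
  (forall v w : T, gdist e v w <= d) /\ (exists v w : T, gdist e v w = d).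

Definition bipartite (T : finType) (e : rel T) : Prop :=
  exists col : T -> bool, forall x y : T, e x y -> col x != col y.

(* K_{m,m} minus the perfect matching {(false,i),(true,i)} *)
Definition cocktail_rel (m : nat) : rel (bool * 'I_m) :=
  fun p q => (p.1 != q.1) && (p.2 != q.2).

Definition is_cocktail_party (T : finType) (e : rel T) : Prop :=
  exists (m : nat) (f : T -> bool * 'I_m),
    bijective f /\ forall x y : T, e x y = cocktail_rel (f x) (f y).

Definition is_graph_aut (T : finType) (e : rel T) (s : {perm T}) : Prop :=
  forall x y : T, e (s x) (s y) = e x y.

Definition moved (T : finType) (s : {perm T}) : nat := #|[set x | s x != x]|.

(* Main.v *)
Require Import Defs.
From mathcomp Require Import all_boot all_fingroup.
From mathcomp Require Import zify.
Set Implicit Arguments. Unset Strict Implicit. Unset Printing Implicit Defensive.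

Lemma ballS (T : finType) (e : rel T) x k y :
  (y \in ball e x k.+1) = (y \in ball e x k) || [exists z, (z \in ball e x k) && e z y].
Proof. by rewrite /= in_setU inE. Qed.

Lemma ball0 (T : finType) (e : rel T) x y : (y \in ball e x 0) = (y == x).
Proof. by rewrite /= inE. Qed.

Lemma gdist_le (T : finType) (e : rel T) x y d :
  y \in ball e x d -> d < #|T| -> gdist e x y <= d.
Proof.
move=> Hy Hd; rewrite /gdist leqNgt; apply/negP => Hlt.
have := before_find 0 Hlt; rewrite nth_iota // add0n.
by rewrite Hy.
Qed.

Lemma gdist_notin (T : finType) (e : rel T) x y j :
  j < gdist e x y -> y \notin ball e x j.
Proof.
move=> Hj; have Hs : j < #|T|.
  by apply: leq_trans Hj _; rewrite /gdist -{2}(size_iota 0 #|T|) find_size.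
have := before_find 0 Hj; rewrite nth_iota // add0n => ->; by [].
Qed.

Lemma gdist_in (T : finType) (e : rel T) x y :
  gdist e x y < #|T| -> y \in ball e x (gdist e x y).
Proof.
move=> H.
have Hh : has (fun k => y \in ball e x k) (iota 0 #|T|) by rewrite has_find size_iota.
have := nth_find 0 Hh; rewrite nth_iota // add0n //.
Qed.

Lemma path_ball (T : finType) (e : rel T) x p :
  path e x p -> last x p \in ball e x (size p).
Proof.
elim/last_ind: p => [|p z IH]; first by rewrite /= inE.
rewrite rcons_path last_rcons size_rcons => /andP[Hp He].
rewrite ballS; apply/orP; right; apply/existsP; exists (last x p).
by rewrite IH.
Qed.

Lemma gdist_lt (T : finType) (e : rel T) x y :
  connect e x y -> gdist e x y < #|T|.
Proof.
case/connectP => p Hp ->.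
case/shortenP: Hp => p' Hp' Hu _.
have Hs : size (x :: p') <= #|T| by rewrite -(card_uniqP Hu); apply: max_card.
apply: leq_ltn_trans (gdist_le (path_ball Hp') _) _; by [].
Qed.




Lemma card_sum (T : finType) (A : {set T}) (P : pred T) :
  #|[set b in A | P b]| = \sum_(b in A) (P b : nat).
Proof.
rewrite -sum1_card big_mkcond [RHS]big_mkcond /=.
apply: eq_bigr => b _; rewrite !inE; by case: (b \in A); case: (P b).
Qed.

Lemma exch (T : finType) (A B : {set T}) (R : T -> T -> bool) :
  \sum_(p in A) #|[set b in B | R p b]| = \sum_(b in B) #|[set p in A | R p b]|.
Proof.
under eq_bigr do rewrite card_sum.
rewrite exchange_big /=; apply: eq_bigr => b _; by rewrite card_sum.
Qed.

Lemma key (T : finType) (r : rel T) (col : T -> bool) (s : {perm T}) (k l : nat) (c : bool) :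
  symmetric r ->
  (forall x y, r (s x) (s y) = r x y) ->
  (forall x, col (s x) = col x) ->
  (forall x, #|[set u | (col u != col x) && r x u]| = k) ->
  (forall x y, x != y -> col x = col y ->
     #|[set u | (col u != col x) && r x u && r y u]| = l) ->
  0 < l ->
  (exists x, (col x == c) && (s x != x)) ->
  2 * #|[set x | (col x == c) && (s x == x)]| <= 2 * k + #|[set x | (col x != c) && (s x != x)]|.
Proof.
move=> rsym raut caut HK HL l0 [x /andP[/eqP cx mx]].
set y := s x.
set F := [set p | (col p == c) && (s p == p)].
set MO := [set B | (col B != c) && (s B != B)].
set Cxy := [set u | (col u != col x) && r x u && r y u].
have cy : col y = col x by rewrite /y caut.
have yx : x != y by rewrite eq_sym.
have HCxy : #|Cxy| = l by apply: HL; rewrite // eq_sym.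
have Hp : forall p, p \in F ->
  2 * l <= #|[set B in MO | r p B]| + 2 * #|[set B in Cxy | r p B]|.
  move=> p; rewrite inE => /andP[/eqP cp /eqP fp].
  have px : p != x by apply/eqP => Epx; move: mx; rewrite -Epx fp eqxx.
  have py : p != y.
    apply/eqP => Epy; move/negP: px; apply; apply/eqP; apply: (@perm_inj _ s).
    by rewrite fp Epy.
  set Cpx := [set u | (col u != col p) && r p u && r x u].
  set Cpy := [set u | (col u != col p) && r p u && r y u].
  have HCpx : #|Cpx| = l by apply: HL; rewrite // cp cx.
  have HCpy : #|Cpy| = l by apply: HL; rewrite // cp cy cx.
  set Ry := [set B | r y B].
  set Rx := [set B | r x B].
  have E1 : Cpx :&: Ry = [set B in Cxy | r p B].
    apply/setP => B; rewrite !inE cp cx; by case: (col B != c); case: (r p B); case: (r x B); case: (r y B).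
  have E2 : Cpy :&: Rx = [set B in Cxy | r p B].
    apply/setP => B; rewrite !inE cp cx; by case: (col B != c); case: (r p B); case: (r x B); case: (r y B).
  have S1 : (Cpx :\: Ry) :|: (Cpy :\: Rx) \subset [set B in MO | r p B].
    apply/subsetP => B; rewrite !inE cp.
    case/orP => /andP[H1 /andP[/andP[H2 H3] H4]]; rewrite H2 H3 /= andbT;
      apply/eqP => fB; move: H1 H4; (have E : r y B = r x B by rewrite /y -{1}fB raut); by rewrite E => /negbTE ->.
  have D : (Cpx :\: Ry) :&: (Cpy :\: Rx) = set0.
    apply/setP => B; rewrite !inE; by case: (r x B); case: (r y B); rewrite ?andbF.
  have := subset_leq_card S1; rewrite cardsU D cards0 subn0.
  have := cardsID Ry Cpx; have := cardsID Rx Cpy.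
  rewrite E1 E2 HCpx HCpy; lia.
have Hsum : \sum_(p in F) (2 * l) <= \sum_(p in F) (#|[set B in MO | r p B]| + 2 * #|[set B in Cxy | r p B]|) by apply: leq_sum.
rewrite sum_nat_const big_split /= -big_distrr /= (exch F MO) (exch F Cxy) in Hsum.
have H1 : \sum_(B in MO) #|[set p in F | r p B]| <= #|MO| * l.
  rewrite -sum_nat_const; apply: leq_sum => B; rewrite inE => /andP[cB mB].
  rewrite -(HL B (s B)) ?caut //; last by rewrite eq_sym.
  apply: subset_leq_card; apply/subsetP => p; rewrite !inE => /andP[/andP[/eqP cp /eqP fp] rpB].
  by rewrite cp eq_sym cB /= rsym rpB /= -fp raut rsym.
have H2 : \sum_(B in Cxy) #|[set p in F | r p B]| <= #|Cxy| * k.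
  rewrite -sum_nat_const; apply: leq_sum => B; rewrite inE => /andP[/andP[cB _] _].
  rewrite -(HK B).
  apply: subset_leq_card; apply/subsetP => p; rewrite !inE => /andP[/andP[/eqP cp /eqP fp] rpB].
  by rewrite cp -cx eq_sym cB rsym rpB.
rewrite HCxy in H2.
have : l * (2 * #|F|) <= l * (2 * k + #|MO|) by nia.
by rewrite leq_pmul2l.
Qed.


Lemma cocktail (T : finType) (e : rel T) (col : T -> bool) (x0 : T) :
  symmetric e -> (forall x y, e x y -> col x != col y) ->
  (forall x, #|[set u | (col u != col x) && ~~ e x u]| = 1) ->
  #|[set x | col x]| = #|[set x | ~~ col x]| ->
  is_cocktail_party e.
Proof.
move=> esym bip H1 HV.
pose Nb x := [set u | (col u != col x) && ~~ e x u].
pose partner x := odflt x [pick u in Nb x].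
have Pin : forall x u, (u \in Nb x) = (u == partner x).
  move=> x u; have /cards1P [a Ha] : #|Nb x| == 1 by rewrite H1.
  have pa : partner x = a.
    rewrite /partner; case: pickP => [b|] /=.
      by rewrite Ha inE => /eqP.
    by move=> /(_ a); rewrite Ha inE eqxx.
  by rewrite Ha inE pa.
have Pc : forall x, col (partner x) != col x.
  move=> x; have := Pin x (partner x); rewrite eqxx inE => /andP[]; by [].
set S := [set x | ~~ col x].
have x0S : (if col x0 then partner x0 else x0) \in S.
  rewrite inE; case E: (col x0) => //; move: (Pc x0); rewrite E; by case: (col (partner x0)).
pose g x := if col x then partner x else x.
have gS : forall x, g x \in S.
  move=> x; rewrite /g inE; case E: (col x) => //; move: (Pc x); rewrite E; by case: (col (partner x)).
pose h x := enum_rank_in x0S (g x).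
have heq : forall x y, (h x == h y) = (g x == g y).
  move=> x y; apply/eqP/eqP; last by rewrite /h => ->.
  by move/enum_rank_in_inj; apply; apply: gS.
have Nbe : forall x u, col u != col x -> (u \in Nb x) = ~~ e x u.
  by move=> x u cu; rewrite inE cu.
exists _, (fun x => (col x, h x)); split.
  apply: inj_card_bij.
    move=> x y [cxy /eqP]; rewrite heq /g -cxy.
    case E: (col x) => /eqP // pxy.
    have cp : col (partner x) != col x := Pc x.
    have Hx : x \in Nb (partner x).
      rewrite Nbe; last by rewrite eq_sym.
      have := Pin x (partner x); rewrite eqxx inE esym => /andP[_]; by [].
    have Hy : y \in Nb (partner x).
      rewrite Nbe; last by rewrite -cxy eq_sym.
      have := Pin y (partner y); rewrite eqxx inE esym pxy => /andP[_]; by [].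
    by rewrite Pin in Hx; rewrite Pin in Hy; rewrite (eqP Hx) (eqP Hy).
  rewrite card_prod card_bool card_ord.
  have := cardsID [set x | col x] [set: T]; rewrite setTI cardsT.
  have -> : [set: T] :\: [set x | col x] = S by apply/setP => x; rewrite !inE andbT.
  move=> H; change (2 * #|S| <= #|T|); have HV2 : #|[set x | col x]| = #|S| := HV; lia.
move=> x y; rewrite /cocktail_rel /= heq /g.
case Ex: (col x); case Ey: (col y) => /=.
- by apply/negbTE/negP => /bip; rewrite Ex Ey.
- have := Nbe x y; rewrite Ex Ey => /(_ isT); rewrite Pin eq_sym => ->; by rewrite negbK.
- have := Nbe y x; rewrite Ex Ey => /(_ isT); rewrite Pin esym => ->; by rewrite negbK.
- by apply/negbTE/negP => /bip; rewrite Ex Ey.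
Qed.


Lemma ball_mono (T : finType) (e : rel T) x y j k :
  j <= k -> y \in ball e x j -> y \in ball e x k.
Proof.
elim: k => [|k IH]; first by rewrite leqn0 => /eqP ->.
rewrite leq_eqVlt => /orP[/eqP -> //| ]; rewrite ltnS => /IH H /H Hy.
by rewrite ballS Hy.
Qed.

Lemma ball1 (T : finType) (e : rel T) x y :
  (y \in ball e x 1) = (y == x) || e x y.
Proof.
rewrite ballS ball0; congr (_ || _); apply/existsP/idP => [[z /andP[]]|H].
  by rewrite ball0 => /eqP ->.
by exists x; rewrite ball0 eqxx.
Qed.

Lemma addKr_ a b c : a + b = c -> b = c - a.
Proof. lia. Qed.

Unset Implicit Arguments.

Theorem proposition5p8 (T : finType) (e : rel T) :
  simple_graph e ->
  distance_regular e ->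
  bipartite e ->
  diameter_eq e 3 ->
  ~ is_cocktail_party e ->
  forall s : {perm T}, is_graph_aut e s -> s != 1%g ->
    #|T| <= 12 * moved s.
Proof.
move=> [esym eirr] [conn [f Hf]] [col Hcol] [Hdm [v0 [w0 Hvw]]] Hnc s Haut s1.
have Glt : forall x y, gdist e x y < #|T| := fun x y => gdist_lt (conn x y).
have T4 : 3 < #|T| by rewrite -Hvw Glt.
have G0 : forall x, gdist e x x = 0.
  move=> x; apply/eqP; rewrite -leqn0; apply: gdist_le; first by rewrite ball0.
  by apply: leq_ltn_trans T4.
have G1 : forall x u, (gdist e x u == 1) = e x u.
  move=> x u; apply/eqP/idP => [H|H].
    have := gdist_in (Glt x u); rewrite H ball1 => /orP[/eqP Eu|//].
    have := @gdist_notin _ e x u 0; rewrite H ball0 Eu eqxx => /(_ isT); by [].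
  apply/eqP; rewrite eqn_leq; apply/andP; split.
    apply: gdist_le; [by rewrite ball1 H orbT | by apply: leq_ltn_trans T4].
  rewrite lt0n; apply/eqP => H0; have := gdist_in (Glt x u); rewrite H0 ball0 => /eqP Eu.
  by move: H; rewrite Eu eirr.
have colE : forall x y, e x y -> col y = ~~ col x.
  move=> x y /Hcol; by case: (col x); case: (col y).
have G2 : forall x y, x != y -> col x = col y -> gdist e x y = 2.
  move=> x y nxy cxy.
  have n1 : y \notin ball e x 1.
    rewrite ball1 eq_sym (negbTE nxy) /=; apply/negP => /colE; rewrite cxy; by case: (col y).
  have i2 : y \in ball e x 2.
    have : y \in ball e x 3 by apply: ball_mono (gdist_in (Glt x y)); apply: Hdm.
    rewrite ballS => /orP[//|/existsP[z /andP[Hz ezy]]].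
    move: Hz; rewrite ballS => /orP[Hz|/existsP[w /andP[Hw ewz]]].
      by rewrite ballS; apply/orP; right; apply/existsP; exists z; rewrite Hz.
    move: Hw; rewrite ball1 => /orP[/eqP Ew|exw].
      rewrite ballS; apply/orP; right; apply/existsP; exists z; rewrite ezy andbT ball1 -Ew ewz orbT; by [].
    have h1 := colE _ _ exw; have h2 := colE _ _ ewz; have h3 := colE _ _ ezy.
    move: h3; rewrite h2 h1 cxy; by case: (col y).
  apply/eqP; rewrite eqn_leq; apply/andP; split.
    by apply: gdist_le i2 _; apply: leq_ltn_trans T4.
  rewrite ltnNge; apply/negP => H; apply/negP: n1; rewrite negbK.
  exact: ball_mono H (gdist_in (Glt x y)).
set k := f 0 1. set l := f 2 1.
pose N x := [set u | (col u != col x) && e x u].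
have HK : forall x, #|N x| = k.
  move=> x; have := Hf x x 1; rewrite /= G0 => /(_ isT); rewrite -/k => <-.
  apply: eq_card => u; rewrite !inE G1 andbb; apply/idP/idP => [/andP[_ ->] | H] //.
  by rewrite H andbT eq_sym Hcol.
have HL : forall x y, x != y -> col x = col y ->
   #|[set u | (col u != col x) && e x u && e y u]| = l.
  move=> x y nxy cxy; have := Hf x y 1; rewrite /= G2 // => /(_ isT); rewrite -/l => <-.
  apply: eq_card => u; rewrite !inE G1; apply/idP/idP => [/andP[/andP[_ ->] ->] // | /andP[H1 H2]].
  by rewrite H1 H2 andbT eq_sym (Hcol _ _ H2).
have [z [z' [ezw nvw ev0z' ez'z]]] : exists z z', [/\ e z w0, ~~ e v0 w0, e v0 z' & e z' z].
  have W3 : w0 \in ball e v0 3 by rewrite -Hvw gdist_in.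
  have W2 : w0 \notin ball e v0 2 by apply: gdist_notin; rewrite Hvw.
  have nvw : ~~ e v0 w0.
    by apply: contra W2 => H; apply: (@ball_mono _ _ _ _ 1) => //; rewrite ball1 H orbT.
  move: W3; rewrite ballS (negbTE W2) orFb => /existsP[z /andP[Hz ezw]].
  move: Hz; rewrite ballS => /orP[Hz|/existsP[z' /andP[Hz' ez'z]]].
    by move/negP: W2; case; rewrite ballS; apply/orP; right; apply/existsP; exists z; rewrite Hz.
  move: Hz'; rewrite ball1 => /orP[/eqP Ez'|ev0z'].
    move/negP: W2; case; rewrite ballS; apply/orP; right; apply/existsP; exists z.
    by rewrite ezw andbT ball1 -Ez' ez'z orbT.
  by exists z, z'.
have zv : z != v0 by apply/eqP => E; move: nvw; rewrite -E ezw.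
have czv : col z = col v0 by rewrite (colE _ _ ez'z) (colE _ _ ev0z') negbK.
have l0 : 0 < l.
  rewrite -(HL v0 z); [ | by rewrite eq_sym | by rewrite czv].
  rewrite card_gt0; apply/set0Pn; exists z'.
  by rewrite !inE (colE _ _ ev0z') ev0z' esym ez'z; case: (col v0).
have lk : l < k.
  rewrite -(HL z v0 zv czv) -(HK z); apply: proper_card; apply/properP; split.
    by apply/subsetP => u; rewrite !inE => /andP[/andP[-> ->] _].
  exists w0; first by rewrite !inE ezw andbT (colE _ _ ezw); case: (col z).
  by rewrite !inE esym (negbTE nvw) andbF.
set V := #|[set x | col x]|.
have HV0 : #|[set x | ~~ col x]| = V.
  have := exch [set x | ~~ col x] [set x | col x] e.
  rewrite (eq_bigr (fun _ => k)); last first.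
    move=> x; rewrite inE => cx; rewrite -(HK x); apply: eq_card => u; rewrite !inE.
    by move: cx; case: (col x) => //= _; case: (col u).
  rewrite [in RHS](eq_bigr (fun _ => k)); last first.
    move=> u; rewrite inE => cu; rewrite -(HK u); apply: eq_card => x; rewrite !inE esym.
    by move: cu; case: (col u) => //= _; case: (col x).
  rewrite !sum_nat_const => /eqP; rewrite eqn_pmul2r; last exact: ltn_trans l0 lk.
  by move/eqP.
have HV : forall c, #|[set x | col x == c]| = V.
  case; [rewrite /V | rewrite -HV0]; apply: eq_card => x; rewrite !inE; by case: (col x).
have HO : forall x, #|[set u | col u != col x]| = V.
  move=> x; rewrite -(HV (~~ col x)); apply: eq_card => u; rewrite !inE.
  by case: (col u); case: (col x).
have Hid : l * (V - 1) = k * (k - 1).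
  set Sc := [set y | col y == col v0] :\ v0.
  have cSc : #|Sc| = V - 1.
    have := cardsD1 v0 [set y | col y == col v0]; rewrite HV inE eqxx /= add1n -/Sc; lia.
  have := exch Sc (N v0) (fun y B => e y B).
  rewrite (eq_bigr (fun _ => l)); last first.
    move=> y; rewrite !inE => /andP[ny /eqP cy]; rewrite -(HL v0 y); [ | by rewrite eq_sym | by rewrite cy].
    by apply: eq_card => B; rewrite !inE.
  rewrite [in RHS](eq_bigr (fun _ => k - 1)); last first.
    move=> B; rewrite !inE => /andP[cB eB].
    have := cardsD1 v0 (N B); rewrite HK inE eq_sym cB esym eB /= add1n => ->; rewrite subn1 /=.
    apply: eq_card => p; rewrite !inE.
    rewrite [e B p]esym -andbA; congr (_ && (_ && _)); move: cB; by case: (col B); case: (col v0); case: (col p).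
  rewrite !sum_nat_const cSc HK; lia.
have kV : k <= V by rewrite -(HK v0) -(HO v0); apply: subset_leq_card; apply/subsetP => u; rewrite !inE => /andP[].
have HK' : forall x, #|[set u | (col u != col x) && ~~ e x u]| = V - k.
  move=> x; have := cardsID (N x) [set u | col u != col x].
  have -> : [set u | col u != col x] :&: N x = N x.
    by apply/setP => u; rewrite !inE; case: (col u != col x).
  have -> : [set u | col u != col x] :\: N x = [set u | (col u != col x) && ~~ e x u].
    by apply/setP => u; rewrite !inE; case: (col u != col x); case: (e x u).
  rewrite (HO x) (HK x); exact: addKr_.
have HL' : forall x y, x != y -> col x = col y ->
   #|[set u | (col u != col x) && ~~ e x u && ~~ e y u]| = V - (2 * k - l).
  move=> x y nxy cxy.
  have U : #|N x :|: N y| = 2 * k - l.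
    rewrite cardsU (HK x) (HK y) -(HL x y nxy cxy).
    have -> : N x :&: N y = [set u | (col u != col x) && e x u && e y u].
      by apply/setP => u; rewrite !inE cxy; case: (col u != col y); case: (e x u); case: (e y u).
    by rewrite addnn -mul2n.
  have := cardsID (N x :|: N y) [set u | col u != col x].
  have -> : [set u | col u != col x] :&: (N x :|: N y) = N x :|: N y.
    by apply/setP => u; rewrite !inE -cxy; case: (col u != col x); rewrite ?andbF.
  have -> : [set u | col u != col x] :\: (N x :|: N y) = [set u | (col u != col x) && ~~ e x u && ~~ e y u].
    by apply/setP => u; rewrite !inE -cxy; case: (col u != col x); case: (e x u); case: (e y u).
  rewrite U (HO x); exact: addKr_.
have kV2 : k <= V - 2.
  case: (ltnP k (V - 1)) => [|Hk]; first lia.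
  have [Hk1|Hk1] : k = V - 1 \/ k = V by lia.
    exfalso; apply: Hnc; apply: (@cocktail _ e col v0) => //.
      by move=> x; rewrite HK' Hk1; lia.
  exfalso; rewrite Hk1 in Hid lk; nia.
have l'0 : 0 < V - (2 * k - l) by clear -Hid kV2 lk l0; nia.
pose gc x := col (s x) (+) col x.
have gce : forall x y, e x y -> gc x = gc y.
  move=> x y exy; have h1 := Hcol _ _ exy.
  have h2 : col (s x) != col (s y) by apply: Hcol; rewrite Haut.
  rewrite /gc; move: h1 h2; case: (col x); case: (col y); case: (col (s x)); case: (col (s y)); by [].
have Hpath : forall p y, path e y p -> gc (last y p) = gc y.
  elim=> [|a p IH] y //= /andP[eya Hp]; by rewrite (IH a Hp) (gce _ _ eya).
have gcc : forall x, gc x = gc v0.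
  by move=> x; case/connectP: (conn v0 x) => p Hp ->; apply: Hpath.
have [x1 mx1] : exists x, s x != x.
  case: (pickP (fun x => s x != x)) => [x1 mx1|H]; first by exists x1.
  move/eqP: s1; case; apply/permP => x; rewrite perm1; apply/eqP.
  by have := H x; rewrite /= => /negbFE.
case Eg: (gc v0).
  have -> : moved s = #|T|.
    rewrite /moved -cardsT; apply: eq_card => x; rewrite !inE; apply/negP => /eqP Ex.
    by move: (gcc x); rewrite Eg /gc Ex; case: (col x).
  lia.
have caut : forall x, col (s x) = col x.
  by move=> x; move: (gcc x); rewrite Eg /gc; case: (col (s x)); case: (col x).
set c := col x1.
have [u mu cu] : exists2 u, s u != u & col u = ~~ c.
  set y1 := s x1.
  have : 0 < #|N x1 :\: N y1|.
    have := cardsID (N y1) (N x1); rewrite (HK x1).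
    have -> : N x1 :&: N y1 = [set u | (col u != col x1) && e x1 u && e y1 u].
      by apply/setP => u; rewrite !inE /y1 caut; case: (col u != col x1); case: (e x1 u).
    rewrite HL; [ | by rewrite eq_sym | by rewrite /y1 caut].
    move=> H; clear -lk H; lia.
  rewrite card_gt0 => /set0Pn [u]; rewrite !inE => /andP[/negP nyu /andP[cu exu]].
  exists u.
    apply/eqP => fu; apply: nyu; rewrite /y1 caut cu /=.
    by have := Haut x1 u; rewrite fu => ->.
  by move: cu; rewrite /c; case: (col u); case: (col x1).
have ex1 : exists x, (col x == c) && (s x != x) by exists x1; rewrite eqxx mx1.
have ex2 : exists x, (col x == ~~ c) && (s x != x) by exists u; rewrite cu eqxx mu.
have symr' : symmetric (fun a b => ~~ e a b) by move=> a b; rewrite /= esym.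
have autr' : forall x y, ~~ e (s x) (s y) = ~~ e x y by move=> a b; rewrite Haut.
have K1 := @key T e col s k l c esym Haut caut HK HL l0 ex1.
have K2 := @key T e col s k l (~~ c) esym Haut caut HK HL l0 ex2.
have K3 := @key T (fun a b => ~~ e a b) col s (V - k) (V - (2 * k - l)) c symr' autr' caut HK' HL' l'0 ex1.
have K4 := @key T (fun a b => ~~ e a b) col s (V - k) (V - (2 * k - l)) (~~ c) symr' autr' caut HK' HL' l'0 ex2.
have FM : forall d, #|[set x | (col x == d) && (s x == x)]| + #|[set x | (col x == d) && (s x != x)]| = V.
  move=> d; rewrite -(HV d) -(cardsID [set x | s x == x] [set x | col x == d]).
  congr (_ + _); apply: eq_card => x; rewrite !inE //; by rewrite andbC.
have Mo : forall d, [set x | (col x != d) && (s x != x)] = [set x | (col x == ~~ d) && (s x != x)].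
  by move=> d; apply/setP => x; rewrite !inE; case: (col x); case: d.
have MV : moved s = #|[set x | (col x == c) && (s x != x)]| + #|[set x | (col x == ~~ c) && (s x != x)]|.
  rewrite /moved -(cardsID [set x | col x == c] [set x | s x != x]).
  congr (_ + _); apply: eq_card => x; rewrite !inE; first by rewrite andbC.
  rewrite /c; by case: (col x); case: (col x1); case: (s x != x).
have TV : #|T| = V + V.
  rewrite -cardsT -(cardsID [set x | col x == c] [set: T]) -{1}(HV c) -(HV (~~ c)).
  congr (_ + _); first by apply: eq_card => x; rewrite !inE.
  by apply: eq_card => x; rewrite !inE /c; case: (col x); case: (col x1).
rewrite Mo in K1 K3; rewrite Mo negbK in K2 K4.
have F1 := FM c; have F2 := FM (~~ c).
rewrite TV MV; clear -K1 K2 K3 K4 F1 F2 kV; lia.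
Qed.
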